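(* There is a universal constant $C$ such that the following holds. Let $R>0$, $K>1$, $\Omega:=B(0,R)\setminus B(0,R/K)\subset\mathbb{R}^2$, and let $f\in L^\infty(\mathbb{R}^2)$ with $\operatorname{supp} f\subset\Omega$. Then for all $x,y\in\Omega$ with $x\ne y$, $$|v_r[f](x)-v_r[f](y)|+|v_\alpha[f](x)-v_\alpha[f](y)|\le CK\|f\|_{L^\infty}|x-y|\Big(1+\log\frac{R}{|x-y|}\Big).$$
   Context: For a vorticity $f$, $v[f](x)=\frac{1}{2\pi}\int_{\mathbb{R}^2}\frac{(x-y)^\perp}{|x-y|^2}f(y)\,dy$ with $(x_1,x_2)^\perp=(-x_2,x_1)$. The radial and angular components of the velocity at $x\neq0$ are $v_r[f](x)=\hat x\cdot v[f](x)$ and $v_\alpha[f](x)=\hat x^\perp\cdot v[f](x)$, where $\hat x=x/|x|$. *)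

(* Defs.v *)
From mathcomp Require Import all_boot all_order all_algebra.
From mathcomp Require Import all_classical all_reals all_analysis.
Set Implicit Arguments. Unset Strict Implicit. Unset Printing Implicit Defensive.
Import Order.TTheory GRing.Theory Num.Theory.
Local Open Scope ring_scope.

Section Defs.
Context {R : realType}.

Definition bs_leb2 := ((@lebesgue_measure R) \x (@lebesgue_measure R))%E.

Definition bs_norm (x : R * R) : R := Num.sqrt (x.1 ^+ 2 + x.2 ^+ 2).

Definition bs_dist (x y : R * R) : R := bs_norm (x.1 - y.1, x.2 - y.2).

(* Biot-Savart velocity v[f](x) = 1/(2 pi) int (x-y)^perp/|x-y|^2 f(y) dy,
   with (z1,z2)^perp = (-z2, z1). *)
Definition bs_v1 (f : R * R -> R) (x : R * R) : R :=
  (2 * pi)^-1 * Rintegral bs_leb2 setT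
    (fun y => (- (x.2 - y.2)) / (bs_dist x y) ^+ 2 * f y).
Definition bs_v2 (f : R * R -> R) (x : R * R) : R :=
  (2 * pi)^-1 * Rintegral bs_leb2 setT
    (fun y => (x.1 - y.1) / (bs_dist x y) ^+ 2 * f y).

Definition bs_vr (f : R * R -> R) (x : R * R) : R :=
  (x.1 / bs_norm x) * bs_v1 f x + (x.2 / bs_norm x) * bs_v2 f x.
Definition bs_valpha (f : R * R -> R) (x : R * R) : R :=
  (- (x.2 / bs_norm x)) * bs_v1 f x + (x.1 / bs_norm x) * bs_v2 f x.

(* Omega = B(0,rad) \ B(0,rad/K) with open balls. *)
Definition bs_annulus (rad K : R) : set (R * R) :=
  [set x | rad / K <= bs_norm x < rad].

Definition bs_Linf (f : R * R -> R) : \bar R :=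
  Lnorm bs_leb2 +oo%E (EFin \o f).

End Defs.

(* Main.v *)
Require Import Defs.
From mathcomp Require Import all_boot all_order all_algebra.
From mathcomp Require Import all_classical all_reals all_analysis.
From mathcomp Require Import measurable_realfun ring lra.
Import Order.TTheory GRing.Theory Num.Theory.
Local Open Scope ring_scope.
Local Open Scope classical_set_scope.
Set Implicit Arguments. Unset Strict Implicit. Unset Printing Implicit Defensive.

Section G.
Context {R : realType}.
Implicit Types x y z w c : R * R.

Lemma dist_sqr x y : bs_dist x y ^+ 2 = (x.1 - y.1) ^+ 2 + (x.2 - y.2) ^+ 2.
Proof. by rewrite /bs_dist /bs_norm /= sqr_sqrtr // addr_ge0 // sqr_ge0. Qed.

Lemma dist_ge0 x y : 0 <= bs_dist x y.
Proof. exact: sqrtr_ge0. Qed.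

Lemma dist_sym x y : bs_dist x y = bs_dist y x.
Proof. by rewrite /bs_dist /bs_norm /= -(sqrrN (x.1 - _)) -(sqrrN (x.2 - _)) !opprB. Qed.

Lemma le_sqrt_sq (S v : R) : 0 <= v -> S <= v ^+ 2 -> Num.sqrt S <= v.
Proof.
move=> v0 Sv; rewrite -(ger0_norm v0) -sqrtr_sqr.
have [S0|S0] := leP 0 S; first by rewrite ler_sqrt // sqr_ge0.
by rewrite ltr0_sqrtr // sqrtr_ge0.
Qed.

Lemma dist_ge1 x y : `|x.1 - y.1| <= bs_dist x y.
Proof.
rewrite /bs_dist /bs_norm /= -sqrtr_sqr ler_sqrt ?addr_ge0 ?sqr_ge0 //.
by rewrite lerDl sqr_ge0.
Qed.

Lemma dist_ge2 x y : `|x.2 - y.2| <= bs_dist x y.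
Proof.
rewrite /bs_dist /bs_norm /= -sqrtr_sqr ler_sqrt ?addr_ge0 ?sqr_ge0 //.
by rewrite lerDr sqr_ge0.
Qed.

Lemma dist_triangle x y z : bs_dist x z <= bs_dist x y + bs_dist y z.
Proof.
rewrite {1}/bs_dist /bs_norm /=.
apply: le_sqrt_sq; first by rewrite addr_ge0 // dist_ge0.
set a1 := x.1 - y.1; set a2 := x.2 - y.2; set b1 := y.1 - z.1; set b2 := y.2 - z.2.
have -> : x.1 - z.1 = a1 + b1 by rewrite /a1 /b1; ring.
have -> : x.2 - z.2 = a2 + b2 by rewrite /a2 /b2; ring.
have CS : a1 * b1 + a2 * b2 <= bs_dist x y * bs_dist y z.
  rewrite /bs_dist /bs_norm /= -/a1 -/a2 -/b1 -/b2 -sqrtrM ?addr_ge0 ?sqr_ge0 //.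
  apply: le_trans (ler_norm _) _; rewrite -sqrtr_sqr ler_sqrt; last first.
    by rewrite mulr_ge0 // addr_ge0 // sqr_ge0.
  have : 0 <= (a1 * b2 - a2 * b1) ^+ 2 by rewrite sqr_ge0.
  by move=> h; nra.
have e1 := dist_sqr x y; have e2 := dist_sqr y z.
rewrite -/a1 -/a2 -/b1 -/b2 in e1 e2; nra.
Qed.


Definition box c (s : R) : set (R * R) :=
  `[c.1 - s, c.1 + s] `*` `[c.2 - s, c.2 + s].

Lemma mbox c s : measurable (box c s).
Proof. by apply: measurableX; apply: measurable_itv. Qed.

Lemma in_box c s w : (box c s w) <-> (`|w.1 - c.1| <= s /\ `|w.2 - c.2| <= s).
Proof.
by rewrite /box /= !in_itv /= !ler_distl.
Qed.

Lemma leb2_box c s : 0 <= s -> bs_leb2 (box c s) = ((2 * s) ^+ 2)%:E.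
Proof.
move=> s0; rewrite /bs_leb2 /box product_measure1E; try exact: measurable_itv.
have -> : forall a b : R, lebesgue_measure_lebesgue_measure__canonical__measure_function_Measure R `[a, b] = lebesgue_measure (`[a, b]%classic : set R) by [].
have -> : forall a b : R, lebesgue_measure_lebesgue_measure__canonical__measure_function_SigmaFiniteMeasure R `[a, b] = lebesgue_measure (`[a, b]%classic : set R) by [].
rewrite !lebesgue_measure_itv /=.
have [->|sp] := eqVneq s 0.
  by rewrite !subr0 !addr0 !ltxx mul0e mulr0 expr0n.
have sp' : 0 < s by rewrite lt_def sp s0.
rewrite !lte_fin !ltrBlDr -!addrA !ltrDl addr_gt0 //.
rewrite -!EFinD -EFinM; congr EFin; ring.
Qed.


End G.


Section D.
Context {R : realType}.

Lemma exists_pow (t r : R) : 0 < t -> 0 < r -> exists n : nat, r / 2 ^+ n.+1 < t.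
Proof.
move=> t0 r0; have := archi_boundP (ltW (divr_gt0 r0 t0)).
set n := Num.bound _ => hn; exists n.
have h1 : (n%:R : R) < 2 ^+ n.+1.
  rewrite -natrX ltr_nat; apply: (ltn_trans (@ltn_expl 2 n isT)).
  by rewrite ltn_exp2l.
have h2 : r / t < 2 ^+ n.+1 by apply: lt_trans hn h1.
have p0 : (0 : R) < 2 ^+ n.+1 by rewrite exprn_gt0.
by rewrite ltr_pdivrMr // mulrC -ltr_pdivrMr.
Qed.

Lemma dyadic_lo (t r : R) : 0 < t -> t <= r ->
  exists k : nat, t <= r / 2 ^+ k /\ r / 2 ^+ k < 2 * t.
Proof.
move=> t0 tr; have r0 : 0 < r by apply: lt_le_trans tr.
have ex : exists k, (r / 2 ^+ k.+1 < t) by exact: exists_pow.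
case: (ex_minnP ex) => k hk hmin; exists k; split.
  case: k hk hmin => [|k] hk hmin; first by rewrite expr0 divr1.
  by rewrite leNgt; apply/negP => /hmin; rewrite ltnn.
have e : r / 2 ^+ k = 2 * (r / 2 ^+ k.+1).
  by rewrite exprS; field; rewrite expf_neq0.
by rewrite e; lra.
Qed.

Lemma dyadic_hi (t a : R) (N : nat) : 0 < a -> a <= t -> t <= 2 ^+ N * a ->
  exists j : nat, (j <= N)%N /\ t <= 2 ^+ j * a /\ 2 ^+ j * a <= 2 * t.
Proof.
move=> a0 at_ tN.
have ex : exists j, (t <= 2 ^+ j * a) by exists N.
case: (ex_minnP ex) => j hj hmin; exists j; split; first exact: hmin.
split => //.
case: j hj hmin => [|j] hj hmin; first by rewrite expr0 mul1r; lra.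
have : ~~ (t <= 2 ^+ j * a).
  by apply/negP => /hmin; rewrite ltnn.
by rewrite -ltNge exprS => h; lra.
Qed.

End D.


Section G2.
Context {R : realType}.
Implicit Types x y z w c : R * R.
Local Open Scope ereal_scope.

Lemma int_ind c (s k : R) : (0 <= s)%R -> (0 <= k)%R ->
  \int[bs_leb2]_w (k * \1_(box c s) w)%:E = (k * (2 * s) ^+ 2)%:E.
Proof.
move=> s0 k0; under eq_integral do rewrite EFinM.
rewrite ge0_integralZl_EFin //.
- rewrite integral_indic; last exact: mbox.
  rewrite (setIT (box c s)).
  transitivity (k%:E * bs_leb2 (box c s)); first by [].
  by rewrite leb2_box // -EFinM.
- exact: measurableT.
- have mi : measurable_fun setT (\1_(box c s) : R * R -> R).
    by apply: measurable_indic; exact: mbox.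
  by apply: measurableT_comp => //; exact: mi.
Qed.

Definition serf c (r : R) (k : nat) (w : R * R) : \bar R :=
  ((2 * 2 ^+ k / r) * \1_(box c (r / 2 ^+ k)) w)%:E.
Definition Ser c r w := \sum_(k <oo) serf c r k w.

Lemma serf_ge0 c r k w : (0 < r)%R -> 0 <= serf c r k w.
Proof.
move=> r0; rewrite lee_fin mulr_ge0 ?indic_ge0 // divr_ge0 ?ltW //.
Qed.

Lemma serf_meas c r k : measurable_fun setT (serf c r k).
Proof.
apply/measurable_EFinP; apply: measurable_funM; first exact: measurable_cst.
by apply: measurable_indic; exact: mbox.
Qed.

Lemma Ser_meas c r : (0 < r)%R -> measurable_fun setT (Ser c r).
Proof.
move=> r0; rewrite /Ser.
have := @ge0_emeasurable_sum _ _ R setT (serf c r) xpredT.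
by apply => // *; [exact: serf_ge0 | exact: serf_meas].
Qed.

Lemma Ser_ge0 c r w : (0 < r)%R -> 0 <= Ser c r w.
Proof. by move=> r0; apply: nneseries_ge0 => *; exact: serf_ge0. Qed.

Lemma int_Ser c r : (0 < r)%R -> \int[bs_leb2]_w Ser c r w = (16 * r)%:E.
Proof.
move=> r0; rewrite /Ser integral_nneseries //; last first.
  by move=> *; exact: serf_ge0.
  by move=> *; exact: serf_meas.
rewrite (eq_eseriesr (fun k _ => int_ind _ _ _)); first last.
  by move=> k; rewrite divr_ge0 ?ltW // mulr_ge0 // exprn_ge0.
  by move=> k; rewrite divr_ge0 ?ltW // exprn_gt0.
transitivity (\sum_(i <oo) ((16 * r) / (2 ^ (i + 1))%:R)%:E).
  apply: eq_eseriesr => i _; congr EFin.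
  rewrite natrX exprD expr1.
  have h2 : ((2 : R) ^+ i != 0)%R by rewrite expf_neq0.
  have hr : (r != 0)%R by rewrite gt_eqF.
  by field; rewrite h2 hr.
have := @cvg_geometric_eseries_half R (16 * r)%R 0.
rewrite expr0 divr1 => /cvg_lim <- //.
Qed.

Definition finf c (a : R) (j : nat) (w : R * R) : \bar R :=
  ((4 / (2 ^+ j * a) ^+ 2) * \1_(box c (2 ^+ j * a)) w)%:E.
Definition Fin c a N w := \sum_(0 <= j < N.+1) finf c a j w.

Lemma finf_ge0 c a j w : 0 <= finf c a j w.
Proof. by rewrite lee_fin mulr_ge0 ?indic_ge0 // divr_ge0 // sqr_ge0. Qed.

Lemma finf_meas c a j : measurable_fun setT (finf c a j).
Proof.
apply/measurable_EFinP; apply: measurable_funM; first exact: measurable_cst.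
by apply: measurable_indic; exact: mbox.
Qed.

Lemma Fin_meas c a N : measurable_fun setT (Fin c a N).
Proof. by apply: emeasurable_sum => j; exact: finf_meas. Qed.

Lemma Fin_ge0 c a N w : 0 <= Fin c a N w.
Proof. by apply: sume_ge0 => j _; exact: finf_ge0. Qed.

Lemma int_Fin c a N : (0 < a)%R ->
  \int[bs_leb2]_w Fin c a N w = (16 * N.+1%:R)%:E.
Proof.
move=> a0; rewrite /Fin ge0_integral_sum //; last first.
  by move=> *; exact: finf_ge0.
  by move=> *; exact: finf_meas.
transitivity (\sum_(0 <= j < N.+1) (16 : R)%:E).
  apply: eq_bigr => j _; rewrite int_ind //; last first.
    by rewrite divr_ge0 // sqr_ge0.
    by rewrite mulr_ge0 // ?exprn_ge0 // ltW.
  congr EFin.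
  have h : (2 ^+ j * a != 0)%R by rewrite mulf_neq0 // ?expf_neq0 // gt_eqF.
  by field; rewrite gt_eqF // expf_neq0.
transitivity ((\sum_(0 <= j < N.+1) (16:R))%:E).
  by rewrite (@sumEFin R nat (index_iota 0 N.+1) xpredT (fun=> 16%R)).
by rewrite sumr_const_nat subn0 mulr_natr.
Qed.
End G2.


Section P.
Context {R : realType}.
Implicit Types x y z w c : R * R.

Definition mx c w : R := Num.max `|w.1 - c.1| `|w.2 - c.2|.

Lemma mx_ge0 c w : 0 <= mx c w.
Proof. by rewrite /mx le_max normr_ge0. Qed.

Lemma mx_le_dist c w : mx c w <= bs_dist c w.
Proof.
rewrite /mx ge_max dist_sym; apply/andP; split; [exact: dist_ge1|exact: dist_ge2].
Qed.

Lemma dist_le_mx c w : bs_dist c w <= 2 * mx c w.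
Proof.
rewrite /bs_dist /bs_norm /=; apply: le_sqrt_sq; first by rewrite mulr_ge0 // mx_ge0.
have h1 : `|w.1 - c.1| <= mx c w by rewrite /mx le_max lexx.
have h2 : `|w.2 - c.2| <= mx c w by rewrite /mx le_max lexx orbT.
have e1 : (c.1 - w.1) ^+ 2 = `|w.1 - c.1| ^+ 2 by rewrite real_normK ?num_real // -sqrrN opprB.
have e2 : (c.2 - w.2) ^+ 2 = `|w.2 - c.2| ^+ 2 by rewrite real_normK ?num_real // -sqrrN opprB.
rewrite e1 e2.
have := normr_ge0 (w.1 - c.1); have := normr_ge0 (w.2 - c.2); nra.
Qed.

Lemma box_mx c s w : mx c w <= s -> box c s w.
Proof. by rewrite /mx ge_max => /andP[h1 h2]; apply/in_box. Qed.

Local Open Scope ereal_scope.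

Lemma Ser_pt c r w : (0 < r)%R -> (mx c w <= r)%R ->
  ((bs_dist c w)^-1)%:E <= Ser c r w.
Proof.
move=> r0 tr; set t := mx c w.
have [d0|dpos] : bs_dist c w = 0%R \/ (0 < bs_dist c w)%R.
  by have := dist_ge0 c w; rewrite le_eqVlt => /predU1P[<-|]; [left|right].
  by rewrite d0 invr0; exact: Ser_ge0.
have t0 : (0 < t)%R by have := dist_le_mx c w; rewrite -/t; lra.
have [k [hk1 hk2]] := dyadic_lo t0 tr.
have hb : box c (r / 2 ^+ k) w by exact: box_mx.
apply: (@le_trans _ _ (serf c r k w)).
  rewrite /serf indicE mem_set // mulr1 lee_fin.
  have q0 : (0 < r / 2 ^+ k)%R by rewrite divr_gt0 // exprn_gt0.
  have -> : (2 * 2 ^+ k / r = 2 / (r / 2 ^+ k))%R.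
    by field; rewrite expf_neq0 // gt_eqF.
  rewrite -(div1r (bs_dist c w)) ler_pdivrMr // mulrAC ler_pdivlMr // mul1r.
  have := mx_le_dist c w; rewrite -/t; lra.
rewrite /Ser (@nneseriesD1 _ _ k) //; last by move=> *; exact: serf_ge0.
by rewrite leeDl // nneseries_ge0 // => *; exact: serf_ge0.
Qed.

Lemma Fin_pt c a N w : (0 < a)%R -> (a <= mx c w)%R -> (mx c w <= 2 ^+ N * a)%R ->
  ((bs_dist c w ^+ 2)^-1)%:E <= Fin c a N w.
Proof.
move=> a0 at_ tN; set t := mx c w in at_ tN *.
have [j [jN [hj1 hj2]]] := dyadic_hi a0 at_ tN.
have hb : box c (2 ^+ j * a) w by exact: box_mx.
have t0 : (0 < t)%R by lra.
have dt : (t <= bs_dist c w)%R by exact: mx_le_dist.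
apply: (@le_trans _ _ (finf c a j w)).
  rewrite /finf indicE mem_set // mulr1 lee_fin.
  have q0 : (0 < 2 ^+ j * a)%R by rewrite mulr_gt0 // exprn_gt0.
  have d0 : (0 < bs_dist c w ^+ 2)%R by rewrite exprn_gt0 //; lra.
  rewrite -(div1r (bs_dist c w ^+ 2)) ler_pdivrMr // mulrAC ler_pdivlMr ?exprn_gt0 // mul1r.
  nra.
rewrite /Fin (bigD1_seq j).
- by rewrite leeDl // sume_ge0 // => *; exact: finf_ge0.
- by rewrite mem_index_iota ltnS jN.
- by rewrite /index_iota subn0 iota_uniq.
Qed.

End P.


Section K.
Context {R : realType}.
Implicit Types x y z w c : R * R.

Definition k1 x w : R := (- (x.2 - w.2)) / (bs_dist x w) ^+ 2.
Definition k2 x w : R := (x.1 - w.1) / (bs_dist x w) ^+ 2.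

Lemma dist0_eq x w : bs_dist x w = 0 -> x = w.
Proof.
move=> d0; have h1 := dist_ge1 x w; have h2 := dist_ge2 x w.
rewrite d0 in h1 h2.
have e1 : x.1 = w.1 by apply/eqP; rewrite -subr_eq0 -normr_le0.
have e2 : x.2 = w.2 by apply/eqP; rewrite -subr_eq0 -normr_le0.
by case: x w e1 e2 {d0 h1 h2} => ? ? [? ?] /= -> ->.
Qed.

Lemma absk_le (u d : R) : 0 <= d -> `|u| <= d -> `|u / d ^+ 2| <= d^-1.
Proof.
move=> d0 ud; have [->|dp] := eqVneq d 0.
  by rewrite expr2 mulr0 invr0 mulr0 normr0.
have dpos : 0 < d by rewrite lt_def dp d0.
rewrite normrM normfV (ger0_norm (sqr_ge0 d)).
by rewrite ler_pdivrMr ?exprn_gt0 // expr2 mulrA mulVf // mul1r.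
Qed.

Lemma k1_le x w : `|k1 x w| <= (bs_dist x w)^-1.
Proof.
apply: absk_le; first exact: dist_ge0.
by rewrite normrN; exact: dist_ge2.
Qed.

Lemma k2_le x w : `|k2 x w| <= (bs_dist x w)^-1.
Proof. by apply: absk_le; [exact: dist_ge0 | exact: dist_ge1]. Qed.

Lemma kdiff_sq x y w : bs_dist x w != 0 -> bs_dist y w != 0 ->
  (k1 x w - k1 y w) ^+ 2 + (k2 x w - k2 y w) ^+ 2 =
  bs_dist x y ^+ 2 / (bs_dist x w ^+ 2 * bs_dist y w ^+ 2).
Proof.
move=> ha hb; rewrite /k1 /k2.
have hA : bs_dist x w ^+ 2 != 0 by rewrite expf_neq0.
have hB : bs_dist y w ^+ 2 != 0 by rewrite expf_neq0.
move: hA hB; rewrite !dist_sqr => hA hB.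
by field; rewrite hA hB.
Qed.

Lemma kdiff_le x y w : bs_dist x w != 0 -> bs_dist y w != 0 ->
  `|k1 x w - k1 y w| <= bs_dist x y / (bs_dist x w * bs_dist y w) /\
  `|k2 x w - k2 y w| <= bs_dist x y / (bs_dist x w * bs_dist y w).
Proof.
move=> ha hb; have e := kdiff_sq ha hb.
have q0 : 0 <= bs_dist x y / (bs_dist x w * bs_dist y w).
  by rewrite divr_ge0 ?mulr_ge0 ?dist_ge0.
have eq2 : bs_dist x y ^+ 2 / (bs_dist x w ^+ 2 * bs_dist y w ^+ 2) =
   (bs_dist x y / (bs_dist x w * bs_dist y w)) ^+ 2.
  by rewrite expr_div_n exprMn.
rewrite eq2 in e.
split; rewrite -sqrtr_sqr; apply: le_sqrt_sq => //; rewrite -e.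
  by rewrite lerDl sqr_ge0.
by rewrite lerDr sqr_ge0.
Qed.

Lemma kdiff_far x y w : 0 < bs_dist x y -> 2 * bs_dist x y <= bs_dist x w ->
  `|k1 x w - k1 y w| <= 2 * bs_dist x y / bs_dist x w ^+ 2 /\
  `|k2 x w - k2 y w| <= 2 * bs_dist x y / bs_dist x w ^+ 2.
Proof.
move=> d0 far.
have tri : bs_dist x w <= bs_dist x y + bs_dist y w by exact: dist_triangle.
have ha : 0 < bs_dist x w by lra.
have hb : 0 < bs_dist y w by lra.
have [h1 h2] := kdiff_le (lt0r_neq0 ha) (lt0r_neq0 hb).
have key : bs_dist x y / (bs_dist x w * bs_dist y w) <= 2 * bs_dist x y / bs_dist x w ^+ 2.
  rewrite ler_pdivrMr ?mulr_gt0 // mulrAC ler_pdivlMr ?exprn_gt0 //.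
  rewrite expr2.
  have h3 : 0 <= bs_dist x y * bs_dist x w * (2 * bs_dist y w - bs_dist x w).
    apply: mulr_ge0; first by apply: mulr_ge0; apply: ltW.
    rewrite subr_ge0; lra.
  nra.
by split; apply: le_trans key.
Qed.

End K.


Section I.
Context {R : realType}.
Implicit Types x y z w c : R * R.

Lemma meas_sq c : measurable_fun setT (fun w : R * R => (c.1 - w.1) ^+ 2 + (c.2 - w.2) ^+ 2).
Proof.
apply: measurable_funD; apply: measurable_funX; apply: measurable_funB;
  try exact: measurable_cst.
  exact: measurable_fst.
exact: measurable_snd.
Qed.

Lemma meas_invsq c : measurable_fun setT (fun w : R * R => (bs_dist c w ^+ 2)^-1).
Proof.
have -> : (fun w : R * R => (bs_dist c w ^+ 2)^-1) =
  (fun w => ((c.1 - w.1) ^+ 2 + (c.2 - w.2) ^+ 2) `^ (-1)).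
  by apply/funext => w; rewrite dist_sqr powR_inv1 // addr_ge0 // sqr_ge0.
have m1 := @measurable_powR R (-1)%R.
have m2 := measurableT_comp m1 (meas_sq c).
exact: m2.
Qed.

Lemma meas_k1 c : measurable_fun setT (k1 c).
Proof.
apply: measurable_funM; last exact: meas_invsq.
apply: measurable_funN; apply: measurable_funB; first exact: measurable_cst.
exact: measurable_snd.
Qed.

Lemma meas_k2 c : measurable_fun setT (k2 c).
Proof.
apply: measurable_funM; last exact: meas_invsq.
apply: measurable_funB; first exact: measurable_cst.
exact: measurable_fst.
Qed.

Local Open Scope ereal_scope.

Lemma Rint_bound (h : R * R -> R) (G : R * R -> \bar R) (B : R) :
  measurable_fun setT h -> (forall w, 0 <= G w) -> measurable_fun setT G ->
  {ae bs_leb2, forall w, (`|h w|)%:E <= G w} ->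
  \int[bs_leb2]_w G w = B%:E ->
  bs_leb2.-integrable setT (EFin \o h) /\
  (`|Rintegral bs_leb2 setT h| <= B)%R.
Proof.
move=> mh G0 mG hae iG.
have mh' : measurable_fun setT (EFin \o h) by apply/measurable_EFinP.
have le : \int[bs_leb2]_w `|(EFin \o h) w| <= B%:E.
  rewrite -iG; apply: ae_ge0_le_integral => //.
  - by apply: measurableT_comp => //.
  - case: hae => N [mN N0 NP]; exists N; split => // w /= nw.
    by apply: NP => /= hw; apply: nw => _; exact: hw.
have ih : bs_leb2.-integrable setT (EFin \o h).
  by apply/integrableP; split => //; apply: le_lt_trans le _; exact: ltry.
split => //.
have fe := integrable_fin_num measurableT ih.
have := le_abse_integral bs_leb2 measurableT mh'.
rewrite /Rintegral; move: fe; set e := \int[_]_(_ in _) _.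
case: e => [r| |] //= _ h1.
by rewrite -lee_fin; apply: le_trans h1 le.
Qed.


Lemma leb2T_gt0 : 0 < bs_leb2 [set: R * R].
Proof.
have h := @leb2_box R (0%R, 0%R) 1%R (@ler01 R).
apply: (@lt_le_trans _ _ (bs_leb2 (box (0%R, 0%R) 1%R))).
  by rewrite h lte_fin exprn_gt0 // mulr_gt0.
apply: le_measure; rewrite ?inE //; exact: mbox.
Qed.

Lemma Linf_ae (f : R * R -> R) : bs_Linf f < +oo ->
  (0 <= fine (bs_Linf f))%R /\
  {ae bs_leb2, forall w, (`|f w| <= fine (bs_Linf f))%R}.
Proof.
move=> fin; move: fin; rewrite /bs_Linf unlock /=.
rewrite (_ : (0 < _)%E = true); last exact: leb2T_gt0.
set L := ess_sup_inf.ess_sup _ _ => Lfin.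
have L0 : 0 <= L.
  apply: ess_sup_inf.ess_sup_gee; first exact: leb2T_gt0.
  by apply: aeW => w /=; rewrite lee_fin normr_ge0.
have LE : L = (fine L)%:E by rewrite fineK // ge0_fin_numE.
split; first by rewrite -lee_fin -LE.
have := ess_sup_inf.ess_sup_ge bs_leb2 (abse \o (EFin \o f)); rewrite -/L.
case=> N [mN N0 NP]; exists N; split => // w /= nw.
by apply: NP => /= hw; apply: nw; rewrite -lee_fin -LE.
Qed.

End I.


Section W.
Context {R : realType}.
Implicit Types x y z w c : R * R.

Lemma norm_dist0 w : bs_norm w = bs_dist w (0, 0).
Proof. by rewrite /bs_dist /= !subr0; case: w. Qed.

Lemma norm_ge1 w : `|w.1| <= bs_norm w.
Proof. by rewrite norm_dist0; have := dist_ge1 w (0, 0); rewrite /= subr0. Qed.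

Lemma norm_ge2 w : `|w.2| <= bs_norm w.
Proof. by rewrite norm_dist0; have := dist_ge2 w (0, 0); rewrite /= subr0. Qed.

Lemma mx_supp c w (rad : R) : bs_norm c < rad -> bs_norm w < rad -> mx c w <= 2 * rad.
Proof.
move=> hc hw; rewrite /mx ge_max.
have a1 := norm_ge1 c; have a2 := norm_ge2 c; have b1 := norm_ge1 w; have b2 := norm_ge2 w.
have := ler_normB w.1 c.1; have := ler_normB w.2 c.2.
by move=> h1 h2; apply/andP; split; lra.
Qed.

Lemma mx_tri x y w : mx y w <= mx x w + bs_dist x y.
Proof.
rewrite {1}/mx ge_max.
have h1 : `|w.1 - x.1| <= mx x w by rewrite /mx le_max lexx.
have h2 : `|w.2 - x.2| <= mx x w by rewrite /mx le_max lexx orbT.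
have := dist_ge1 x y; have := dist_ge2 x y.
have e1 : w.1 - y.1 = (w.1 - x.1) + (x.1 - y.1) by ring.
have e2 : w.2 - y.2 = (w.2 - x.2) + (x.2 - y.2) by ring.
have := ler_normD (w.1 - x.1) (x.1 - y.1); have := ler_normD (w.2 - x.2) (x.2 - y.2).
rewrite -e1 -e2 => g1 g2 d1 d2; apply/andP; split; lra.
Qed.

Local Open Scope ereal_scope.

Lemma pw1 (kv fv M rad : R) c w : (0 <= M)%R -> (0 < rad)%R ->
  (`|kv| <= (bs_dist c w)^-1)%R -> (`|fv| <= M)%R ->
  (fv != 0%R -> (mx c w <= 2 * rad)%R) ->
  (`|kv * fv|)%:E <= M%:E * Ser c (2 * rad) w.
Proof.
move=> M0 r0 hk hf hs.
have S0 : 0 <= Ser c (2 * rad) w by apply: Ser_ge0; rewrite mulr_gt0.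
have [->|fn0] := eqVneq fv 0%R.
  by rewrite mulr0 normr0 mule_ge0.
rewrite normrM EFinM muleC; apply: lee_pmul => //.
have sp := @Ser_pt R c (2 * rad)%R w (mulr_gt0 (ltr0n _ 2) r0 : (0 < 2 * rad)%R) (hs fn0).
by apply: le_trans sp; rewrite lee_fin.
Qed.

Definition S3 x y (d : R) (N : nat) w :=
  Ser x (2 * d) w + Ser y (3 * d) w + (2 * d)%:E * Fin x (2 * d) N w.

Lemma S3_ge0 x y d N w : (0 < d)%R -> 0 <= S3 x y d N w.
Proof.
move=> d0; rewrite /S3; apply: adde_ge0; first apply: adde_ge0.
- by apply: Ser_ge0; rewrite mulr_gt0.
- by apply: Ser_ge0; rewrite mulr_gt0.
- by apply: mule_ge0; [rewrite lee_fin mulr_ge0 // ltW | exact: Fin_ge0].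
Qed.

Lemma pw2 (kx ky fv M : R) (N : nat) x y w : (0 <= M)%R ->
  let d := bs_dist x y in (0 < d)%R ->
  (`|kx| <= (bs_dist x w)^-1)%R -> (`|ky| <= (bs_dist y w)^-1)%R ->
  ((2 * d <= bs_dist x w)%R -> (`|kx - ky| <= 2 * d / bs_dist x w ^+ 2)%R) ->
  (`|fv| <= M)%R ->
  (fv != 0%R -> (mx x w <= 2 ^+ N * (2 * d))%R) ->
  (`|(kx - ky) * fv|)%:E <= M%:E * S3 x y d N w.
Proof.
move=> M0 d d0 hkx hky hfar hf hs.
have S0 := S3_ge0 x y N w d0.
have [->|fn0] := eqVneq fv 0%R.
  by rewrite mulr0 normr0 mule_ge0.
rewrite normrM EFinM muleC; apply: lee_pmul => //.
have hmx := hs fn0.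
have [near|far] := ltP (mx x w) (2 * d)%R.
  have my : (mx y w <= 3 * d)%R by have := mx_tri x y w; rewrite -/d; lra.
  have s1 := @Ser_pt R x (2 * d)%R w (mulr_gt0 (ltr0n _ 2) d0) (ltW near).
  have s2 := @Ser_pt R y (3 * d)%R w (mulr_gt0 (ltr0n _ 3) d0) my.
  apply: (@le_trans _ _ ((`|kx| + `|ky|)%:E)).
    by rewrite lee_fin ler_normB.
  rewrite /S3 -[X in X <= _]adde0; apply: leeD.
    by rewrite EFinD; apply: leeD; apply: le_trans s1 || apply: le_trans s2;
      rewrite lee_fin.
  by apply: mule_ge0; [rewrite lee_fin mulr_ge0 // ltW | exact: Fin_ge0].
have dx : (2 * d <= bs_dist x w)%R by apply: (le_trans far (mx_le_dist x w)).
have hk := hfar dx.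
have fp := @Fin_pt R x (2 * d)%R N w (mulr_gt0 (ltr0n _ 2) d0) far hmx.
apply: (@le_trans _ _ ((2 * d)%:E * Fin x (2 * d) N w)).
  apply: le_trans (lee_wpmul2l _ fp); last by rewrite lee_fin mulr_ge0 // ltW.
  by rewrite -EFinM lee_fin.
rewrite /S3 leeDr // adde_ge0 // Ser_ge0 // mulr_gt0 //.
Qed.

End W.


Section B.
Context {R : realType}.
Implicit Types x y z w c : R * R.

Variable k : R * R -> R * R -> R.
Hypothesis mk : forall c, measurable_fun setT (k c).
Hypothesis kle : forall c w, `|k c w| <= (bs_dist c w)^-1.
Hypothesis kfar : forall x y w, 0 < bs_dist x y -> 2 * bs_dist x y <= bs_dist x w ->
  `|k x w - k y w| <= 2 * bs_dist x y / bs_dist x w ^+ 2.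

Variables (f : R * R -> R) (M rad : R).
Hypothesis M0 : 0 <= M.
Hypothesis rad0 : 0 < rad.
Hypothesis mf : measurable_fun setT f.
Hypothesis fae : {ae bs_leb2, forall w, `|f w| <= M}.
Hypothesis fsupp : forall w, f w != 0 -> bs_norm w < rad.

Lemma single_bound c : bs_norm c < rad ->
  bs_leb2.-integrable setT (EFin \o (fun w => k c w * f w)) /\
  `|Rintegral bs_leb2 setT (fun w => k c w * f w)| <= M * (16 * (2 * rad)).
Proof.
move=> hc.
have r2 : 0 < 2 * rad by rewrite mulr_gt0.
apply: (@Rint_bound R _ (fun w => M%:E * Ser c (2 * rad) w)%E).
- exact: measurable_funM.
- by move=> w; rewrite mule_ge0 // ?lee_fin // Ser_ge0.
- by apply: measurable_funeM; exact: Ser_meas.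
- case: fae => N [mN N0 NP]; exists N; split => // w /= nw.
  apply: NP => /= hw; apply: nw.
  apply: pw1 => // fn0.
  by apply: mx_supp => //; apply: fsupp.
- rewrite ge0_integralZl //.
  + by rewrite int_Ser // -EFinM.
  + exact: Ser_meas.
  + by move=> w _; exact: Ser_ge0.
Qed.


Lemma int_S3 x y (d : R) N : 0 < d ->
  (\int[bs_leb2]_w S3 x y d N w =
   (16 * (2 * d) + 16 * (3 * d) + 2 * d * (16 * N.+1%:R))%:E)%E.
Proof.
move=> d0.
have d2 : 0 < 2 * d by rewrite mulr_gt0.
have d3 : 0 < 3 * d by rewrite mulr_gt0.
rewrite /S3 ge0_integralD //.
- rewrite ge0_integralD //.
  + rewrite int_Ser // int_Ser // ge0_integralZl //.
    * by rewrite int_Fin // -!EFinD -EFinM.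
    * exact: Fin_meas.
    * by move=> w _; exact: Fin_ge0.
    * by rewrite lee_fin ltW.
  + by move=> w _; exact: Ser_ge0.
  + exact: Ser_meas.
  + by move=> w _; exact: Ser_ge0.
  + exact: Ser_meas.
- by move=> w _; rewrite adde_ge0 // Ser_ge0.
- by apply: emeasurable_funD; exact: Ser_meas.
- by move=> w _; rewrite mule_ge0 ?Fin_ge0 // lee_fin ltW.
- by apply: measurable_funeM; exact: Fin_meas.
Qed.


Lemma S3_meas x y d N : 0 < d -> measurable_fun setT (S3 x y d N).
Proof.
move=> d0; apply: emeasurable_funD; first apply: emeasurable_funD.
- by apply: Ser_meas; rewrite mulr_gt0.
- by apply: Ser_meas; rewrite mulr_gt0.
- by apply: measurable_funeM; exact: Fin_meas.
Qed.

Lemma diff_bound x y N : 0 < bs_dist x y -> rad <= 2 ^+ N * bs_dist x y ->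
  bs_norm x < rad -> bs_norm y < rad ->
  `|Rintegral bs_leb2 setT (fun w => k x w * f w) -
    Rintegral bs_leb2 setT (fun w => k y w * f w)|
   <= M * (16 * (2 * bs_dist x y) + 16 * (3 * bs_dist x y) +
           2 * bs_dist x y * (16 * N.+1%:R)).
Proof.
move=> d0 hN hx hy; set d := bs_dist x y.
have [ix _] := single_bound hx; have [iy _] := single_bound hy.
rewrite -(RintegralB measurableT ix iy).
rewrite (_ : (fun w => k x w * f w - k y w * f w) = (fun w => (k x w - k y w) * f w)); last first.
  by apply/funext => w; rewrite mulrBl.
apply: (proj2 (@Rint_bound _ _ (fun w => M%:E * S3 x y d N w)%E _ _ _ _ _ _)).
- apply: measurable_funM => //; exact: measurable_funB.
- by move=> w; rewrite mule_ge0 ?lee_fin // S3_ge0.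
- by apply: measurable_funeM; exact: S3_meas.
- case: fae => N' [mN N0 NP]; exists N'; split => // w /= nw.
  apply: NP => /= hw; apply: nw.
  apply: pw2 => //.
  + by move=> h; apply: kfar.
  + move=> fn0; apply: le_trans (mx_supp hx (fsupp fn0)) _.
    by rewrite -/d mulrCA ler_pM2l.
- rewrite ge0_integralZl //.
  + by rewrite int_S3 // -EFinM.
  + exact: S3_meas.
  + by move=> w _; exact: S3_ge0.
Qed.

End B.


Section F.
Context {R : realType}.
Implicit Types x y z w c : R * R.

Lemma hat_le (a n : R) : `|a| <= n -> `|a / n| <= 1.
Proof.
move=> h; have n0 : 0 <= n by apply: le_trans h.
have [->|np] := eqVneq n 0; first by rewrite invr0 mulr0 normr0.
have p : 0 < n by rewrite lt_def np n0.
by rewrite normrM normfV (gtr0_norm p) ler_pdivrMr // mul1r.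
Qed.

Lemma hat_diff (a b p q d : R) : 0 < p -> 0 < q -> `|a - b| <= d -> `|b| <= q ->
  `|q - p| <= d -> `|a / p - b / q| <= 2 * d / p.
Proof.
move=> p0 q0 hab hb hqp.
have e : a / p - b / q = ((a - b) + b * (q - p) / q) / p.
  by field; rewrite gt_eqF // gt_eqF.
rewrite e normrM normfV (gtr0_norm p0) ler_pdivrMr // divfK ?gt_eqF //.
have t : `|b * (q - p) / q| <= d.
  rewrite normrM normfV (gtr0_norm q0) ler_pdivrMr // normrM.
  have := normr_ge0 b; have := normr_ge0 (q - p); nra.
have := ler_normD (a - b) (b * (q - p) / q); lra.
Qed.

Lemma prod_le (a b A B : R) : `|a| <= A -> `|b| <= B -> `|a * b| <= A * B.
Proof.
move=> ha hb; rewrite normrM; apply: ler_pM => //; exact: normr_ge0.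
Qed.

Lemma norm4 (s1 s2 s3 s4 : R) : `|s1 + s2 + s3 + s4| <= `|s1| + `|s2| + `|s3| + `|s4|.
Proof.
apply: le_trans (ler_normD _ _) _; rewrite lerD2r.
apply: le_trans (ler_normD _ _) _; rewrite lerD2r.
exact: ler_normD.
Qed.

Lemma combine (hx1 hx2 hy1 hy2 V1x V2x V1y V2y E P Q : R) :
  `|hx1| <= 1 -> `|hx2| <= 1 -> `|hx1 - hy1| <= E -> `|hx2 - hy2| <= E ->
  `|V1x - V1y| <= P -> `|V2x - V2y| <= P -> `|V1y| <= Q -> `|V2y| <= Q ->
  `|(hx1 * V1x + hx2 * V2x) - (hy1 * V1y + hy2 * V2y)| +
  `|((- hx2) * V1x + hx1 * V2x) - ((- hy2) * V1y + hy1 * V2y)|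
   <= 4 * P + 4 * (E * Q).
Proof.
move=> a1 a2 b1 b2 c1 c2 d1 d2.
have e1 : (hx1 * V1x + hx2 * V2x) - (hy1 * V1y + hy2 * V2y) =
  hx1 * (V1x - V1y) + hx2 * (V2x - V2y) + (hx1 - hy1) * V1y + (hx2 - hy2) * V2y by ring.
have e2 : ((- hx2) * V1x + hx1 * V2x) - ((- hy2) * V1y + hy1 * V2y) =
  (- hx2) * (V1x - V1y) + hx1 * (V2x - V2y) + (- (hx2 - hy2)) * V1y + (hx1 - hy1) * V2y by ring.
rewrite e1 e2.
have := norm4 (hx1 * (V1x - V1y)) (hx2 * (V2x - V2y)) ((hx1 - hy1) * V1y) ((hx2 - hy2) * V2y).
have := norm4 ((- hx2) * (V1x - V1y)) (hx1 * (V2x - V2y)) ((- (hx2 - hy2)) * V1y) ((hx1 - hy1) * V2y).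
have := prod_le a1 c1; have := prod_le a2 c2; have := prod_le b1 d1; have := prod_le b2 d2.
have a2' : `|- hx2| <= 1 by rewrite normrN.
have b2' : `|- (hx2 - hy2)| <= E by rewrite normrN.
have := prod_le a2' c1; have := prod_le a1 c2; have := prod_le b2' d1; have := prod_le b1 d2.
lra.
Qed.


Definition c0 : R := 1 + ln (2^-1).
Definition l2 : R := ln 2.

Lemma l2_gt0 : 0 < l2.
Proof. by rewrite /l2 ln_gt0 // ltr1n. Qed.

Lemma c0_gt0 : 0 < c0.
Proof.
rewrite /c0 lnV ?posrE // subr_gt0.
have h : 2 < expR (1 : R) by have := @expR_gt1Dx R 1 (oner_neq0 _); lra.
rewrite -[X in _ < X](expRK 1) ltr_ln ?posrE ?expR_gt0 //.
Qed.

Lemma N_bound (rad d : R) (N : nat) : 0 < d -> d < 2 * rad ->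
  (forall n, rad <= 2 ^+ n * d -> (N <= n)%N) ->
  N.+1%:R <= (2 / c0 + 1 / l2) * (1 + ln (rad / d)).
Proof.
move=> d0 drad hmin.
have r0 : 0 < rad by lra.
set L := 1 + ln (rad / d).
have hL : c0 <= L.
  rewrite /c0 /L lerD2l ler_ln ?posrE ?divr_gt0 //.
  by rewrite ler_pdivlMr //; lra.
have c00 := c0_gt0; have l20 := l2_gt0.
have hu : 1 <= L / c0 by rewrite ler_pdivlMr // mul1r.
have L0 : 0 < L by lra.
have v0 : 0 <= L / l2 by rewrite divr_ge0 // ltW.
have e : (2 / c0 + 1 / l2) * L = 2 * (L / c0) + L / l2 by rewrite /L; field; rewrite gt_eqF // gt_eqF.
rewrite e.
case: N hmin => [|n] hmin; first by lra.
have hn : 2 ^+ n * d < rad.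
  by rewrite ltNge; apply/negP => /hmin; rewrite ltnn.
have hn' : n%:R * l2 < L - 1.
  rewrite /L (addrC 1) addrK /l2 mulr_natl -lnXn //.
  by rewrite ltr_ln ?posrE ?exprn_gt0 ?divr_gt0 // ltr_pdivlMr.
have hv : n%:R <= L / l2 by rewrite ler_pdivlMr //; lra.
rewrite -addn1 natrD; lra.
Qed.

End F.


Unset Implicit Arguments.
Local Close Scope classical_set_scope.

Theorem corollary3p2 (R : realType) :
  exists C : R, forall (rad K : R) (f : R * R -> R),
    0 < rad -> 1 < K ->
    measurable_fun setT f ->
    (bs_Linf f < +oo)%E ->
    (forall z, ~ bs_annulus rad K z -> f z = 0) ->
    forall x y : R * R, bs_annulus rad K x -> bs_annulus rad K y -> x <> y ->
      `|bs_vr f x - bs_vr f y| + `|bs_valpha f x - bs_valpha f y|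
        <= C * K * fine (bs_Linf f) * bs_dist x y
             * (1 + ln (rad / bs_dist x y)).
Proof.
exists ((2 * pi)^-1 * (576 / c0 + 128 * (2 / c0 + 1 / l2))).
move=> rad K f rad0 K1 mf fin supp x y hx hy xy.
have [M0 fae] := Linf_ae fin.
set M := fine (bs_Linf f) in M0 fae *.
set d := bs_dist x y.
have d0 : 0 < d.
  rewrite lt_def dist_ge0 andbT; apply/eqP => /dist0_eq; exact: xy.
move: hx hy => /andP[hx1 hx2] /andP[hy1 hy2].
have fsupp : forall w, f w != 0 -> bs_norm w < rad.
  move=> w fn0; have [/andP[_ ->] //|na] := pselect (bs_annulus rad K w).
  by move: fn0; rewrite supp // eqxx.
have K0 : 0 < K by lra.
have rK : 0 < rad / K by rewrite divr_gt0.
have nx0 : 0 < bs_norm x by lra.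
have ny0 : 0 < bs_norm y by lra.
have d2r : d < 2 * rad.
  have e1 := norm_dist0 x; have e2 := norm_dist0 y.
  have := dist_triangle x (0, 0) y.
  by rewrite (dist_sym (0, 0) y) -e1 -e2 -/d; lra.
have [n hn] := exists_pow d0 rad0.
have exN : exists N, rad <= 2 ^+ N * d.
  by exists n.+1; rewrite -ler_pdivrMl ?exprn_gt0 // mulrC ltW.
case: (ex_minnP exN) => N hN hmin.
have Nb := N_bound d0 d2r hmin.
have kfar1 : forall x' y' w : R * R, 0 < bs_dist x' y' -> 2 * bs_dist x' y' <= bs_dist x' w ->
  `|k1 x' w - k1 y' w| <= 2 * bs_dist x' y' / bs_dist x' w ^+ 2.
  by move=> x' y' w a b; case: (kdiff_far a b).
have kfar2 : forall x' y' w : R * R, 0 < bs_dist x' y' -> 2 * bs_dist x' y' <= bs_dist x' w ->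
  `|k2 x' w - k2 y' w| <= 2 * bs_dist x' y' / bs_dist x' w ^+ 2.
  by move=> x' y' w a b; case: (kdiff_far a b).
have [_ s1] := single_bound meas_k1 k1_le M0 rad0 mf fae fsupp hy2.
have [_ s2] := single_bound meas_k2 k2_le M0 rad0 mf fae fsupp hy2.
have t1 := diff_bound meas_k1 k1_le kfar1 M0 rad0 mf fae fsupp d0 hN hx2 hy2.
have t2 := diff_bound meas_k2 k2_le kfar2 M0 rad0 mf fae fsupp d0 hN hx2 hy2.
have ip0 : 0 < (2 * pi)^-1 :> R by rewrite invr_gt0 mulr_gt0 // pi_gt0.
set ip := (2 * pi)^-1 in ip0 *.
set B2 := M * (16 * (2 * d) + 16 * (3 * d) + 2 * d * (16 * N.+1%:R)) in t1 t2.
set B1 := M * (16 * (2 * rad)) in s1 s2.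
have V1 : `|bs_v1 f x - bs_v1 f y| <= ip * B2.
  by rewrite /bs_v1 -mulrBr normrM (gtr0_norm ip0) ler_pM2l.
have V2 : `|bs_v2 f x - bs_v2 f y| <= ip * B2.
  by rewrite /bs_v2 -mulrBr normrM (gtr0_norm ip0) ler_pM2l.
have W1 : `|bs_v1 f y| <= ip * B1.
  by rewrite /bs_v1 normrM (gtr0_norm ip0) ler_pM2l.
have W2 : `|bs_v2 f y| <= ip * B1.
  by rewrite /bs_v2 normrM (gtr0_norm ip0) ler_pM2l.
have hq : `|bs_norm y - bs_norm x| <= d.
  have e1 := norm_dist0 x; have e2 := norm_dist0 y.
  have := dist_triangle x y (0, 0); have := dist_triangle y x (0, 0).
  rewrite -e1 -e2 (dist_sym y x) -/d => h1 h2.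
  by rewrite ler_norml; apply/andP; split; lra.
set E := 2 * d * K / rad.
have hE : 2 * d / bs_norm x <= E.
  have -> : E = 2 * d / (rad / K) by rewrite /E; field; rewrite gt_eqF // gt_eqF.
  apply: ler_wpM2l; first by rewrite mulr_ge0 // ltW.
  by rewrite lef_pV2 ?posrE.
have hd1 : `|x.1 / bs_norm x - y.1 / bs_norm y| <= E.
  by apply: le_trans hE; apply: hat_diff => //; [exact: dist_ge1 | exact: norm_ge1].
have hd2 : `|x.2 / bs_norm x - y.2 / bs_norm y| <= E.
  by apply: le_trans hE; apply: hat_diff => //; [exact: dist_ge2 | exact: norm_ge2].
have hl1 : `|x.1 / bs_norm x| <= 1 by apply: hat_le; exact: norm_ge1.
have hl2 : `|x.2 / bs_norm x| <= 1 by apply: hat_le; exact: norm_ge2.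
have CB := combine hl1 hl2 hd1 hd2 V1 V2 W1 W2.
rewrite /bs_vr /bs_valpha; apply: le_trans CB _.
set L := 1 + ln (rad / d) in Nb *.
have Lc : c0 <= L.
  rewrite /c0 /L lerD2l ler_ln ?posrE ?divr_gt0 //.
  by rewrite ler_pdivlMr //; lra.
have c00 := @c0_gt0 R; have l20 := @l2_gt0 R.
set c1 := 2 / c0 + 1 / l2 in Nb *.
have eqL : 4 * (ip * B2) + 4 * (E * (ip * B1)) =
  ip * M * d * (320 + 128 * N.+1%:R + 256 * K).
  by rewrite /B1 /B2 /E; field; rewrite gt_eqF.
rewrite eqL.
have u1 : 1 <= L / c0 by rewrite ler_pdivlMr // mul1r.
have eqR : ip * (576 / c0 + 128 * c1) * K * M * d * L =
  ip * M * d * (576 * K * (L / c0) + 128 * (c1 * L) * K).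
  by field; rewrite gt_eqF.
rewrite eqR; apply: ler_wpM2l; first by rewrite !mulr_ge0 // ltW.
have N0 : 0 <= N.+1%:R :> R by [].
have Ku : 1 <= K * (L / c0) by nra.
have K1' : 0 <= K - 1 by lra.
have := mulr_ge0 (le_trans N0 Nb) K1'.
have u1' : 0 <= L / c0 - 1 by lra.
have h2 := mulr_ge0 (ltW K0) u1'.
have h1 := mulr_ge0 (le_trans N0 Nb) K1'.
move: Nb Ku h1 h2; set u := L / c0; set cL := c1 * L; set n1 := N.+1%:R.
move=> Nb Ku h1 h2 _.
have e1 : 576 * K * u = 320 * (K * u) + 256 * (K * u) by ring.
have e2 : 128 * cL * K = 128 * cL + 128 * (cL * (K - 1)) by ring.
have e3 : K * (u - 1) = K * u - K by ring.
rewrite e1 e2; rewrite e3 in h2; lra.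
Qed.
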